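(* Let $q$ be a real number with $q\notin\{0,1,-1\}$ and let $a,b\in\mathbb{C}$. Then, as identities of formal power series in $z$ (hence for $z$ in a neighborhood of $0$): (1) $\mathrm{E}_q(a,b;z)\,\mathrm{E}_q(b,a;-z)=1$; (2) $\mathrm{E}_{q^{-1}}(a,b;z)=\mathrm{E}_q(b,a;z)$; (3) $\mathrm{E}_q(1,-q;z)=\frac{1}{1-(1-q)z}$; (4) $\mathrm{E}_q(-q,1;z)=1+(1-q)z$.
   Context: $[n]_q=\frac{1-q^n}{1-q}$, $[0]_q!=1$, $[n]_q!=\prod_{k=1}^n[k]_q$. $(a\oplus b)^0_{1,q}=1$, $(a\oplus b)^n_{1,q}=\prod_{i=0}^{n-1}(a+bq^i)$. $\mathrm{E}_q(a,b;z)=\sum_{n=0}^\infty(a\oplus b)^n_{1,q}\frac{z^n}{[n]_q!}$. *)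

(* Defs.v *)
From HB Require Import structures.
From mathcomp Require Import all_boot all_order all_algebra.
From mathcomp Require Import reals.
From mathcomp.real_closed Require Import complex.
Set Implicit Arguments. Unset Strict Implicit. Unset Printing Implicit Defensive.
Import Order.TTheory GRing.Theory Num.Theory.
Local Open Scope ring_scope.

(* Formal power series in z over a ring K are represented by their
   coefficient sequences  nat -> K. *)
Definition fps (K : Type) := nat -> K.

Definition fps_mul (K : pzRingType) (f g : fps K) : fps K :=
  fun n => \sum_(i < n.+1) f i * g (n - i)%N.

Definition fps_one (K : pzRingType) : fps K := fun n => (n == 0%N)%:R.

Definition fps_negz (K : pzRingType) (f : fps K) : fps K :=
  fun n => (-1) ^+ n * f n.

Definition fps_lin (K : pzRingType) (c : K) : fps K :=
  fun n => if n == 0%N then 1 else if n == 1%N then c else 0.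

Definition qint (K : fieldType) (q : K) (n : nat) : K := (1 - q ^+ n) / (1 - q).

Definition qfact (K : fieldType) (q : K) (n : nat) : K :=
  \prod_(1 <= k < n.+1) qint q k.

Definition qpow (K : fieldType) (a b q : K) (n : nat) : K :=
  \prod_(i < n) (a + b * q ^+ i).

Definition Eq (K : fieldType) (q a b : K) : fps K :=
  fun n => qpow a b q n / qfact q n.

(* Main.v *)
Require Import Defs.
From HB Require Import structures.
From mathcomp Require Import all_boot all_order all_algebra.
From mathcomp Require Import reals.
From mathcomp.real_closed Require Import complex.
From mathcomp Require Import ring lra zify.
From Stdlib Require Import FunctionalExtensionality.
Import Order.TTheory GRing.Theory Num.Theory.
Local Open Scope ring_scope.

Local Open Scope complex_scope.
Set Implicit Arguments. Unset Strict Implicit.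
Section Gen.
Variable K : fieldType.

Lemma Eq_S (q a b : K) n :
  Eq q a b n.+1 = Eq q a b n * (a + b * q ^+ n) / qint q n.+1.
Proof.
rewrite /Eq /qpow /qfact big_ord_recr big_nat_recr //= invfM; ring.
Qed.

Lemma Eq_0 (q a b : K) : Eq q a b 0 = 1.
Proof. by rewrite /Eq /qpow /qfact big_ord0 big_geq // divr1. Qed.

Variable q : K.
Hypothesis hq1 : 1 - q != 0.
Hypothesis hqn : forall k, 1 - q ^+ k.+1 != 0.

Lemma qint_neq0 k : qint q k.+1 != 0.
Proof. by rewrite /qint mulf_neq0 // invr_eq0. Qed.

Lemma qint0 : qint q 0%N = 0.
Proof. by rewrite /qint expr0 subrr mul0r. Qed.

Lemma qintD i m : qint q (i + m) = qint q i + q ^+ i * qint q m.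
Proof. rewrite /qint exprD; field; done. Qed.

Lemma Eq_rec (a b : K) i :
  qint q i.+1 * Eq q a b i.+1 = (a + b * q ^+ i) * Eq q a b i.
Proof.
have h := qint_neq0 i.
rewrite Eq_S; field; done.
Qed.

Lemma prod_rec (a b : K) (f g : nat -> K)
  (hf : forall i, qint q i.+1 * f i.+1 = (a + b * q ^+ i) * f i)
  (hg : forall m, qint q m.+1 * g m.+1 = - (b + a * q ^+ m) * g m) n :
  qint q n.+1 * fps_mul f g n.+1 = a * (1 - q ^+ n) * fps_mul f g n.
Proof.
rewrite /fps_mul mulr_sumr.
have -> : \sum_(i < n.+2) qint q n.+1 * (f i * g (n.+1 - i)%N)
  = \sum_(i < n.+2) (qint q i * f i) * g (n.+1 - i)%N
    + \sum_(i < n.+2) q ^+ i * f i * (qint q (n.+1 - i)%N * g (n.+1 - i)%N).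
  rewrite -big_split /=; apply: eq_bigr => i _.
  have hi := ltn_ord i.
  rewrite -{1}(subnKC (_ : (i <= n.+1)%N)) // qintD; ring.
rewrite big_ord_recl; change (nat_of_ord (@ord0 n.+1)) with 0%N; rewrite qint0 mul0r mul0r add0r.
rewrite [X in _ + X]big_ord_recr /= subnn qint0 mul0r mulr0 addr0.
rewrite mulr_sumr -big_split /=; apply: eq_bigr => i _.
have hi := ltn_ord i.
rewrite /bump /= add1n subSS.
rewrite hf.
have -> : (n.+1 - i = (n - i).+1)%N by lia.
rewrite hg.
have -> : q ^+ n = q ^+ i * q ^+ (n - i) by rewrite -exprD subnKC.
ring.
Qed.

End Gen.

Lemma real_pow_neq1 (R : realType) (q : R) :
  q != 0 -> q != 1 -> q != -1 -> forall k, 1 - q ^+ k.+1 != 0.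
Proof.
move=> h0 h1 hm k; rewrite subr_eq0 eq_sym; apply/negP => /eqP h.
have : `|q| ^+ k.+1 == 1 by rewrite -normrX h normr1.
rewrite pexpr_eq1 // eqr_norml ler01 andbT.
by rewrite (negbTE h1) (negbTE hm).
Qed.

Theorem mainTheorem15 (R : realType) (q : R) (a b : R[i])
  (hq0 : q != 0) (hq1 : q != 1) (hqm1 : q != -1) :
  [/\ fps_mul (Eq q%:C a b) (fps_negz (Eq q%:C b a)) = fps_one R[i],
      Eq (q^-1)%:C a b = Eq q%:C b a,
      fps_mul (Eq q%:C 1 (- q%:C)) (fps_lin (- (1 - q%:C))) = fps_one R[i]
    & Eq q%:C (- q%:C) 1 = fps_lin (1 - q%:C)].
Proof.
set Q := q%:C.
have hQ0 : Q != 0 by rewrite fmorph_eq0.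
have hQn : forall k, 1 - Q ^+ k.+1 != 0.
  move=> k; rewrite /Q -rmorphXn -(rmorph1 (real_complex R)) -rmorphB fmorph_eq0.
  exact: real_pow_neq1.
have hQ1 : 1 - Q != 0 by have := hQn 0%N; rewrite expr1.
have eQ : (q^-1)%:C = Q^-1 := fmorphV (real_complex R) q.
clearbody Q.
have hqi := qint_neq0 hQ1 hQn.
split.
- apply: functional_extensionality => n.
  set c := fps_mul _ _.
  have hc0 : c 0%N = 1.
    by rewrite /c /fps_mul big_ord_recr big_ord0 /= /fps_negz !Eq_0 add0r expr0 !mulr1.
  have hg : forall m, qint Q m.+1 * fps_negz (Eq Q b a) m.+1 =
        - (b + a * Q ^+ m) * fps_negz (Eq Q b a) m.
    move=> m; rewrite /fps_negz.
    have h := Eq_rec hQ1 hQn b a m.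
    rewrite exprS.
    transitivity (-1 * (-1) ^+ m * (qint Q m.+1 * Eq Q b a m.+1)); first by ring.
    rewrite h; ring.
  have hrec := prod_rec hQ1 (Eq_rec hQ1 hQn a b) hg.
  have hS : forall n, c n.+1 = 0.
    elim=> [|k IH]; [have := hrec 0%N | have := hrec k.+1]; rewrite -/c => /eqP;
      rewrite ?expr0 ?subrr ?IH ?mulr0 ?mul0r mulf_eq0 (negbTE (hqi _)) /= => /eqP //.
  by case: n => [|n]; rewrite /fps_one /= ?hc0 ?hS.
- apply: functional_extensionality => n.
  rewrite eQ.
  have key : forall k, qint Q^-1 k.+1 = Q^-1 ^+ k * qint Q k.+1.
    move=> k; rewrite /qint !exprVn !exprS.
    have hk : Q ^+ k != 0 by rewrite expf_neq0.
    have hQ1' : Q - 1 != 0 by rewrite -opprB oppr_eq0.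
    field. by rewrite hQ1 hk hQ0 hQ1'.
  elim: n => [|n IH]; first by rewrite !Eq_0.
  rewrite !Eq_S IH key exprVn.
  have hk : Q ^+ n != 0 by rewrite expf_neq0.
  have := hqi n. move=> hh.
  field. by rewrite ?hQ1 ?hQ0 ?hk ?hh.
- have hE : forall n, Eq Q 1 (- Q) n = (1 - Q) ^+ n.
    elim=> [|n IH]; first by rewrite Eq_0 expr0.
    rewrite Eq_S IH /qint !exprS.
    have := hQn n; rewrite exprS => hh.
    field. by rewrite ?hQ1 ?hQ0 ?hk ?hh.
  apply: functional_extensionality => n.
  rewrite /fps_mul; case: n => [|n].
    by rewrite big_ord_recr big_ord0 /= hE /fps_lin /fps_one /= add0r expr0 mulr1.
  rewrite big_ord_recr big_ord_recr /= big1 ?add0r.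
    rewrite !hE subnn subSn // subnn /fps_lin /fps_one /=.
    rewrite exprS; ring.
  move=> i _; rewrite /fps_lin /=.
  have hi := ltn_ord i.
  have -> : (n.+1 - i == 0)%N = false by apply/negbTE; lia.
  have -> : (n.+1 - i == 1)%N = false by apply/negbTE; lia.
  by rewrite mulr0.
- apply: functional_extensionality => n.
  case: n => [|[|n]].
  + by rewrite Eq_0 /fps_lin.
  + rewrite Eq_S Eq_0 /fps_lin /= /qint expr1 expr0.
    field. by rewrite ?hQ1 ?hQ0 ?hk ?hh.
  + rewrite /Eq /qpow big_ord_recl big_ord_recl /= /fps_lin /=.
    by rewrite (_ : bump 0 0 = 1%N) // expr1 !mul1r addNr mul0r mulr0 mul0r.
Qed.
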